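(* Let $X$ be a set and $\{d_r\colon X\times X\to\mathbb{R}_{\ge0}\cup\{\infty\}\}_{r>0}$ a family satisfying the weaker $\{d_r\}$-axioms (see context). Then the $D$-topology of the diffeology on $X$ induced by $\{d_r\}_{r>0}$ is finer than the topology on $X$ induced by $\{d_r\}_{r>0}$, namely the topology in which $W\subset X$ is open iff for every $x\in W$ there are $r,\varepsilon>0$ with $\{y\in X\mid d_r(x,y)<\varepsilon\}\subset W$.
   Context: The weaker $\{d_r\}$-axioms, required for all $x,y,z\in X$: (Self-distance) $d_r(x,x)=0$ for all $r>0$. (Upper semi-continuity) if $r_1\le r_2$ then $d_{r_1}(x,y)\le d_{r_2}(x,y)$; and if $d_r(x,y)<\varepsilon$ there is $\delta>0$ with $d_{r+\delta}(x,y)<\varepsilon$. (Weaker triangle inequality) for $r_1,r_2,r_3>0$, if $d_{r_1+r_2+r_3}(x,y)<r_3$ and $d_{r_1+r_2+r_3}(y,z)<r_2$, then $d_{r_1}(x,z)\le d_{r_1+r_2+r_3}(x,y)+d_{r_1+r_2+r_3}(y,z)$. The diffeology induced by $\{d_r\}$ consists of the maps $p\colon U_p\to X$ ($U_p$ open in some $\mathbb{R}^n$) such that for each $t_0\in U_p$ there is $\delta>0$ with (1) $t\mapsto d_r(p(t_0),p(t))$ real-valued and continuous on the open ball $B_\delta(t_0)$ for every $r>0$, and (2) for each $t_1\in B_\delta(t_0)\setminus p^{-1}(p(t_0))$ and each $r>0$, $t\mapsto d_r(p(t_1),p(t))$ is smooth at $t_0$ (this set is a diffeology). The $D$-topology of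 a diffeology is the largest topology on $X$ for which all plots are continuous, i.e. $W\subset X$ is $D$-open iff $p^{-1}(W)$ is open for every plot $p$. *)

(* Defs.v *)
From HB Require Import structures.
From mathcomp Require Import all_boot all_order all_algebra.
From mathcomp Require Import all_classical all_reals all_analysis.
Set Implicit Arguments. Unset Strict Implicit. Unset Printing Implicit Defensive.
Import Order.TTheory GRing.Theory Num.Theory.
Import numFieldNormedType.Exports.
Local Open Scope classical_set_scope.
Local Open Scope ring_scope.

(* A family {d_r}_{r>0} is modelled as d : R -> X -> X -> \bar R; only its
   values at r > 0 matter. *)

Definition dr_nonneg (R : realType) (X : Type) (d : R -> X -> X -> \bar R) :=
  forall r x y, 0 < r -> (0 <= d r x y)%E.

Definition weaker_dr_axioms (R : realType) (X : Type) (d : R -> X -> X -> \bar R) :=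
  dr_nonneg d /\
  (forall r x, 0 < r -> d r x x = 0%E) /\
  (* upper semi-continuity, part 1: monotonicity in r *)
  (forall r1 r2 x y, 0 < r1 -> r1 <= r2 -> (d r1 x y <= d r2 x y)%E) /\
  (forall r (eps : R) x y, 0 < r -> (d r x y < eps%:E)%E ->
     exists delta : R, 0 < delta /\ (d (r + delta)%R x y < eps%:E)%E) /\
  (forall r1 r2 r3 x y z, 0 < r1 -> 0 < r2 -> 0 < r3 ->
     (d (r1 + r2 + r3)%R x y < r3%:E)%E -> (d (r1 + r2 + r3)%R y z < r2%:E)%E ->
     (d r1 x z <= d (r1 + r2 + r3)%R x y + d (r1 + r2 + r3)%R y z)%E).

Definition eball (R : realType) (n : nat) (t0 : 'rV[R]_n) (delta : R) : set 'rV[R]_n :=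
  [set t | \sum_(i < n) (t ord0 i - t0 ord0 i) ^+ 2 < delta ^+ 2].

Definition evec (R : realType) (n : nat) (i : 'I_n) : 'rV[R]_n := delta_mx ord0 i.

Fixpoint pder (R : realType) (n : nat) (l : seq 'I_n) (f : 'rV[R]_n -> R) : 'rV[R]_n -> R :=
  match l with
  | [::] => f
  | i :: l' => fun t => derive (pder l' f) t (evec R i)
  end.

Definition smooth_on (R : realType) (n : nat) (V : set 'rV[R]_n) (f : 'rV[R]_n -> R) :=
  (forall (l : seq 'I_n) (i : 'I_n) t, V t -> derivable (pder l f) t (evec R i)) /\
  (forall (l : seq 'I_n) t, V t -> {for t, continuous (pder l f)}).

Definition smooth_at (R : realType) (n : nat) (U : set 'rV[R]_n)
    (f : 'rV[R]_n -> \bar R) (t0 : 'rV[R]_n) :=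
  exists V : set 'rV[R]_n, [/\ open V, V t0, V `<=` U,
    (forall t, V t -> f t \is a fin_num) & smooth_on V (fine \o f)].

Definition dr_plot (R : realType) (X : Type) (d : R -> X -> X -> \bar R)
    (n : nat) (U : set 'rV[R]_n) (p : 'rV[R]_n -> X) :=
  open U /\
  forall t0, U t0 -> exists delta : R, 0 < delta /\ eball t0 delta `<=` U /\
    (forall r, 0 < r ->
       (forall t, eball t0 delta t -> d r (p t0) (p t) \is a fin_num) /\
       {within eball t0 delta, continuous (fun t => fine (d r (p t0) (p t)))}) /\
    (forall t1, eball t0 delta t1 -> p t1 <> p t0 ->
       forall r, 0 < r -> smooth_at U (fun t => d r (p t1) (p t)) t0).

Definition D_open (R : realType) (X : Type) (d : R -> X -> X -> \bar R) (W : set X) :=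
  forall (n : nat) (U : set 'rV[R]_n) (p : 'rV[R]_n -> X),
    dr_plot d U p -> open (U `&` p @^-1` W).

Definition dr_open (R : realType) (X : Type) (d : R -> X -> X -> \bar R) (W : set X) :=
  forall x, W x -> exists r eps : R, 0 < r /\ 0 < eps /\
    [set y | (d r x y < eps%:E)%E] `<=` W.

(* Main.v *)
Require Import Defs.
From HB Require Import structures.
From mathcomp Require Import all_boot all_order all_algebra.
From mathcomp Require Import all_classical all_reals all_analysis.
From mathcomp Require Import lra.
Import Order.TTheory GRing.Theory Num.Theory.
Import numFieldNormedType.Exports.
Local Open Scope classical_set_scope.
Local Open Scope ring_scope.

Lemma eball_nbhs (R : realType) (n : nat) (t0 : 'rV[R]_n) (delta : R) :
  0 < delta -> nbhs t0 (eball t0 delta).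
Proof.
move=> d0.
set c := delta ^+ 2 / (n.+1)%:R.
have c0 : 0 < c by rewrite divr_gt0 // exprn_gt0.
have s0 : 0 < Num.sqrt c by rewrite sqrtr_gt0.
have H : forall i : 'I_n, \forall t \near t0, ((t : 'rV[R]_n) ord0 i - t0 ord0 i) ^+ 2 < c.
  move=> i.
  have ct := @coord_continuous R 1 n ord0 i t0.
  apply: (filterS _ (cvgr_dist_lt _ _ ct _ s0)) => t ht.
  rewrite -(sqr_sqrtr (ltW c0)) -real_normK ?num_real //.
  rewrite distrC in ht.
  have n0 : 0 <= `|t ord0 i - t0 ord0 i| by [].
  rewrite expr2 expr2; nra.
apply: (filterS _ (filter_forall _ H)) => t ht; rewrite /eball /=.
apply: (le_lt_trans (y := \sum_(i < n) c)).
  by apply: ler_sum => i _; apply: ltW.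
rewrite sumr_const card_ord.
have -> : delta ^+ 2 = c *+ n.+1.
  by rewrite -mulr_natr /c divfK // pnatr_eq0.
by rewrite mulrS ltrDr.
Qed.

Theorem propositionA2 (R : realType) (X : Type) (d : R -> X -> X -> \bar R) :
  weaker_dr_axioms d ->
  forall W : set X, dr_open d W -> D_open d W.
Proof.
move=> [_ [dxx _]] W hW n U p [oU hp].
rewrite openE => t0 [Ut0 Wt0].
have [r [eps [r0 [eps0 sub]]]] := hW _ Wt0.
have [delta [d0 [sE [/(_ r r0) [fin ct] _]]]] := hp t0 Ut0.
have E0 : eball t0 delta t0.
  rewrite /eball /= big1; first by rewrite exprn_gt0.
  by move=> i _; rewrite subrr expr0n.
have cv := (subspace_continuousP _ _).1 ct t0 E0.
have Hlt : \forall t \near within (eball t0 delta) (nbhs t0),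
    fine (d r (p t0) (p t)) < eps.
  apply: (filterS _ (cvgr_dist_lt _ _ cv _ eps0)) => t.
  move=> h; move: h; rewrite /from_subspace /= dxx //= sub0r normrN => h.
  exact: le_lt_trans (ler_norm _) h.
have nE := @eball_nbhs R n t0 delta d0.
rewrite /interior /=.
have Hlt' : nbhs t0 (fun t => eball t0 delta t -> fine (d r (p t0) (p t)) < eps) := Hlt.
apply: (filterS _ (filterI Hlt' nE)) => t [h Et]; split; first exact: sE.
apply: sub => /=.
have := fin t Et.
move: (h Et); case: (d r (p t0) (p t)) => //= x hx _; rewrite ?lte_fin.
Qed.
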